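(* Let $B\in\mathbb{Z}^{n\times m}$, $C\in\mathbb{Z}^{m\times n}$ and the box $\mathcal{D}$ be as in the context, and suppose now that $J_2=\mathrm{diag}(a_1,\dots,a_n)$ and $J_4=\mathrm{diag}(b_1,\dots,b_n)$ are uncertain diagonal matrices with $a_i\in[a_i^-,a_i^+]$, $b_i\in[b_i^-,b_i^+]$ (finite intervals); let $\mathcal{J}$ denote the set of admissible pairs $(J_2,J_4)$. Assume (A1) holds and (A2) holds for every $(J_2,J_4)\in\mathcal{J}$. Define $\Psi^-(\kappa)=\min_{\Delta\in\mathcal{D},(J_2,J_4)\in\mathcal{J}}\det[-(B\Delta C+\kappa^2J_2+\kappa^4J_4)]$ and $\Psi^+(\kappa)=\max_{\Delta\in\mathcal{D},(J_2,J_4)\in\mathcal{J}}\det[-(B\Delta C+\kappa^2J_2+\kappa^4J_4)]$. Then: (i) if the system exhibits microphase separation for some $(\Delta,J_2,J_4)\in\mathcal{D}\times\mathcal{J}$, then $\Psi^+$ is initially positive; (ii) if either $\Psi^-$ or $\Psi^+$ is initially positive and has a negative sign change, then the system exhibits microphase separation for some $(\Delta,J_2,J_4)\in\mathcal{D}\times\mathcal{J}$; (iii) if $\Psi^-$ is initially positive and $\Psi^+$ has a negative sign change, then the system exhibits microphase separation for every $(\Delta,J_2,J_4)\in\mathcal{D}\times\mathcal{J}$; (iv) for each $\kappa\ge0$, $\Psi^-(\kappa)$ and $\Psi^+(\kappa)$ equal respectively the minimum and maximum of $\det[-(B\Delta C+\kappa^2J_2+\kappa^4J_4)]$ over the finitely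 many vertices of the box $\mathcal{D}\times\mathcal{J}$ (all $\Delta_j\in\{\Delta_j^-,\Delta_j^+\}$, $a_i\in\{a_i^-,a_i^+\}$, $b_i\in\{b_i^-,b_i^+\}$).
   Context: Let $n,m\ge 1$. Given bounds $0\le \Delta_j^-\le \Delta_j^+<\infty$ ($j=1,\dots,m$), $\mathcal{D}$ is the set of diagonal matrices $\Delta=\mathrm{diag}(\Delta_1,\dots,\Delta_m)$ with $\Delta_j^-\le\Delta_j\le\Delta_j^+$. Assumption (A1): for every $\Delta\in\mathcal{D}$, $B\Delta C$ is singular and has $n-1$ eigenvalues (with multiplicity) with negative real part, and there is a nonzero $v\ge0$ with $v^\top B=0$. Assumption (A2) for a pair $(J_2,J_4)$ of symmetric matrices: $J_2$ is indefinite, $J_4$ is negative semidefinite, and there exists $\bar\kappa$ with $\bar\kappa^2J_2+\bar\kappa^4J_4$ negative definite. For real $\kappa\ge0$ let $\rho(\Delta,J_2,J_4,\kappa)$ be the spectral abscissa (maximum real part of eigenvalues) of $B\Delta C+\kappa^2J_2+\kappa^4J_4$. A continuous function $f$ on $[0,\infty)$ is initially positive if there is $\hat\kappa>0$ with $f>0$ on $(0,\hat\kappa)$; it has a negative sign change if $f(\kappa_1)>0>f(\kappa_2)$ for some $\kappa_1<\kappa_2$. The system exhibits microphase separation for $(\Delta,J_2,J_4)$ if there is $\hat\kappa>0$ with $\rho(\Delta,J_2,J_4,\kappa)<0$ for all $\kappa\in(0,\hat\kappa)$ and there are $\hat\kappa<\kappa_1<\kappa_2$ with $\rho(\Delta,J_2,J_4,\kappa_1)>0$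 and $\rho(\Delta,J_2,J_4,\kappa_2)<0$. *)

(* Defs.v *)
From HB Require Import structures.
From mathcomp Require Import all_boot all_order all_algebra.
From mathcomp Require Import closed_field complex.
From mathcomp Require Import classical_sets reals.

Set Implicit Arguments.
Unset Strict Implicit.
Unset Printing Implicit Defensive.

Import Order.TTheory GRing.Theory Num.Theory.
Local Open Scope ring_scope.

Section Defs.
Variable R : realType.

Definition intmx (p q : nat) (A : 'M[int]_(p, q)) : 'M[R]_(p, q) :=
  map_mx (fun z : int => z%:~R) A.

Definition eigs (n : nat) (A : 'M[R]_n) : seq (R[i]) :=
  sval (closed_field_poly_normal
          (map_poly (fun x : R => x%:C%C) (char_poly A))).

Definition spectral_abscissa (n : nat) (A : 'M[R]_n) : R :=
  let s := eigs A in
  \big[Num.max/complex.Re (head 0 s)]_(z <- s) complex.Re z.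

Definition qform (n : nat) (J : 'M[R]_n) (x : 'cV[R]_n) : R :=
  (x^T *m J *m x) ord0 ord0.

Definition indefinite (n : nat) (J : 'M[R]_n) : Prop :=
  (exists x, 0 < qform J x) /\ (exists y, qform J y < 0).

Definition neg_semidef (n : nat) (J : 'M[R]_n) : Prop :=
  forall x, qform J x <= 0.

Definition neg_def (n : nat) (J : 'M[R]_n) : Prop :=
  forall x, x != 0 -> qform J x < 0.

Definition A2 (n : nat) (J2 J4 : 'M[R]_n) : Prop :=
  [/\ J2^T = J2, J4^T = J4, indefinite J2, neg_semidef J4 &
      exists kb : R, neg_def (kb ^+ 2 *: J2 + kb ^+ 4 *: J4)].

Definition in_box (p : nat) (lo hi d : 'rV[R]_p) : Prop :=
  forall j, lo ord0 j <= d ord0 j <= hi ord0 j.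

Definition vertex (p : nat) (lo hi : 'rV[R]_p) (s : {ffun 'I_p -> bool}) :
  'rV[R]_p := \row_j (if s j then hi ord0 j else lo ord0 j).

Definition sysmx (n m : nat) (B : 'M[int]_(n, m)) (C : 'M[int]_(m, n))
    (d : 'rV[R]_m) (a b : 'rV[R]_n) (k : R) : 'M[R]_n :=
  intmx B *m diag_mx d *m intmx C + k ^+ 2 *: diag_mx a + k ^+ 4 *: diag_mx b.

Definition rho n m B C d a b k : R :=
  spectral_abscissa (@sysmx n m B C d a b k).

Definition microphase n m B C d a b : Prop :=
  exists kh : R, 0 < kh /\
    (forall k, 0 < k < kh -> @rho n m B C d a b k < 0) /\
    exists k1 k2, [/\ kh < k1, k1 < k2,
                      @rho n m B C d a b k1 > 0 & @rho n m B C d a b k2 < 0].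

Definition initially_positive (f : R -> R) : Prop :=
  exists kh : R, 0 < kh /\ forall k, 0 < k < kh -> 0 < f k.

Definition neg_sign_change (f : R -> R) : Prop :=
  exists k1 k2 : R, [/\ 0 <= k1, k1 < k2, 0 < f k1 & f k2 < 0].

Definition det_values n m B C (dlo dhi : 'rV[R]_m) (alo ahi blo bhi : 'rV[R]_n)
    (k : R) : set R :=
  fun x => exists d a b, [/\ in_box dlo dhi d, in_box alo ahi a,
                             in_box blo bhi b &
                             x = \det (- @sysmx n m B C d a b k)].

Definition Psi_minus n m B C dlo dhi alo ahi blo bhi (k : R) : R :=
  inf (@det_values n m B C dlo dhi alo ahi blo bhi k).

Definition Psi_plus n m B C dlo dhi alo ahi blo bhi (k : R) : R :=
  sup (@det_values n m B C dlo dhi alo ahi blo bhi k).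

End Defs.

(* Main.v *)
Require Import Defs.
From HB Require Import structures.
From mathcomp Require Import all_boot all_order all_algebra.
From mathcomp Require Import closed_field complex.
From mathcomp Require Import classical_sets reals.
From mathcomp Require Import polyrcf ring lra.
From Stdlib Require Classical_Prop.
Import Order.TTheory GRing.Theory Num.Theory.
Local Open Scope ring_scope.

Set Implicit Arguments.
Unset Strict Implicit.
Unset Printing Implicit Defensive.

Section Cplx.
Variable R : realType.
Local Notation C := (R[i]).

Definition nr (z : C) : R := Num.sqrt (complex.Re z ^+ 2 + complex.Im z ^+ 2).

Lemma normE (z : C) : `|z| = (nr z)%:C%C.
Proof. by rewrite normc_def. Qed.

Lemma nr_ge0 z : 0 <= nr z.
Proof. exact: sqrtr_ge0. Qed.

Lemma nrM x y : nr (x * y) = nr x * nr y.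
Proof.
case: x => a b; case: y => c d; rewrite /nr /= -sqrtrM ?addr_ge0 ?sqr_ge0 //.
by congr Num.sqrt; ring.
Qed.

Lemma nrD x y : nr (x + y) <= nr x + nr y.
Proof. have := ler_normD x y; rewrite !normE. move=> h. rewrite -(@lecR R). rewrite rmorphD. exact: h. Qed.

Lemma nrN x : nr (- x) = nr x.
Proof. by case: x => a b; rewrite /nr /= !sqrrN. Qed.

Lemma nrB x y : nr (x - y) <= nr x + nr y.
Proof. by rewrite (le_trans (nrD _ _)) // nrN. Qed.

Lemma nr_real (k : R) : nr k%:C%C = `|k|.
Proof. by rewrite /nr /= expr0n /= addr0 sqrtr_sqr. Qed.

Lemma nr_Re z : complex.Re z <= nr z.
Proof.
rewrite (le_trans (ler_norm _)) // -sqrtr_sqr /nr ler_sqrt ?addr_ge0 ?sqr_ge0 //.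
by rewrite lerDl sqr_ge0.
Qed.

Lemma nr0 z : nr z = 0 -> z = 0.
Proof. by move=> h; apply/eqP; rewrite -normr_eq0 normE h. Qed.

Lemma nr_sum (I : Type) (s : seq I) (F : I -> C) :
  nr (\sum_(i <- s) F i) <= \sum_(i <- s) nr (F i).
Proof.
elim: s => [|x s IH]; first by rewrite !big_nil /nr /= expr0n /= addr0 sqrtr0.
by rewrite !big_cons (le_trans (nrD _ _)) // lerD2l.
Qed.

Lemma nr_prod (I : Type) (s : seq I) (F : I -> C) :
  nr (\prod_(i <- s) F i) = \prod_(i <- s) nr (F i).
Proof.
elim: s => [|x s IH]; first by rewrite !big_nil /nr /= expr0n /= addr0 expr1n sqrtr1.
by rewrite !big_cons nrM IH.
Qed.

Lemma nrX x k : nr (x ^+ k) = nr x ^+ k.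
Proof.
elim: k => [|k IH]; first by rewrite !expr0 /nr /= expr0n /= addr0 expr1n sqrtr1.
by rewrite !exprS nrM IH.
Qed.

End Cplx.
Section Eigs.
Variable R : realType.
Local Notation C := (R[i]).
Variable n : nat.
Implicit Types M : 'M[R]_n.

Definition pc M : {poly C} := map_poly (real_complex R) (char_poly M).

Lemma eigsE M : pc M = \prod_(z <- eigs M) ('X - z%:P).
Proof.
rewrite /eigs; case: closed_field_poly_normal => s /= hs.
rewrite /pc; rewrite [LHS]hs.
have -> : lead_coef (map_poly (fun x : R => x%:C%C) (char_poly M)) = 1.
  by rewrite (lead_coef_map (real_complex R)) (monicP (char_poly_monic M)) rmorph1.
by rewrite scale1r.
Qed.

Lemma mem_eigs M z : (z \in eigs M) = root (pc M) z.
Proof. by rewrite eigsE root_prod_XsubC. Qed.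

Lemma size_eigs M : size (eigs M) = n.
Proof.
have := congr1 (fun p : {poly C} => size p) (eigsE M) => /=; rewrite size_prod_XsubC /pc size_map_poly size_char_poly.
by case.
Qed.

Lemma eig_real M (x : R) : root (char_poly M) x -> (x%:C)%C \in eigs M.
Proof.
move=> /rootP h; rewrite mem_eigs; apply/rootP.
by rewrite /pc horner_map h rmorph0.
Qed.

Lemma charpoly0 M : (char_poly M).[0] = \det (- M).
Proof.
rewrite horner_coef0 char_poly_det -scaleN1r detZ.
by [].
Qed.

Lemma bigmax_seq (T : eqType) (s : seq T) (F : T -> R) x0 :
  let m := \big[Num.max/x0]_(z <- s) F z in
  [/\ x0 <= m, (forall z, z \in s -> F z <= m) &
     (m = x0 \/ exists2 z, z \in s & m = F z)].
Proof.
elim: s => [|y s IH] /=; first by rewrite big_nil; split => //; left.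
case: IH => h1 h2 h3; rewrite big_cons; split.
- by rewrite le_max h1 orbT.
- move=> z; rewrite inE => /orP[/eqP->|/h2 hz]; first by rewrite le_max lexx.
  by rewrite le_max hz orbT.
- case: h3 => [->|[z zs ->]].
  + case: (leP (F y) x0) => hh.
    * by left.
    * by right; exists y; rewrite ?inE ?eqxx.
  + case: (leP (F y) (F z)) => hh.
    * by right; exists z; rewrite // inE zs orbT.
    * by right; exists y; rewrite ?inE ?eqxx.
Qed.

Lemma rho_lt0P M : spectral_abscissa M < 0 -> forall z, z \in eigs M -> complex.Re z < 0.
Proof.
rewrite /spectral_abscissa => h z zs.
by case: (bigmax_seq (eigs M) (@complex.Re R) (complex.Re (head 0 (eigs M)))) => _ /(_ z zs) hz _;
  apply: le_lt_trans h.
Qed.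

Lemma rho_lt0 M : (0 < n)%N -> (forall z, z \in eigs M -> complex.Re z < 0) ->
  spectral_abscissa M < 0.
Proof.
move=> n0 h; rewrite /spectral_abscissa.
case: (bigmax_seq (eigs M) (@complex.Re R) (complex.Re (head 0 (eigs M)))) => _ _ [->|[z zs ->]];
  last exact: h.
apply: h; move: (size_eigs M); case: (eigs M) => [|a s] /=; last by rewrite inE eqxx.
by move=> h0; rewrite -h0 in n0.
Qed.

Lemma rho_gt0 M z : z \in eigs M -> 0 < complex.Re z -> 0 < spectral_abscissa M.
Proof.
move=> zs h; rewrite /spectral_abscissa.
case: (bigmax_seq (eigs M) (@complex.Re R) (complex.Re (head 0 (eigs M)))) => _ /(_ z zs) hz _.
exact: lt_le_trans hz.
Qed.

Lemma detpos M : (forall x : R, 0 <= x -> ~~ root (char_poly M) x) -> 0 < \det (- M).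
Proof.
move=> h; rewrite -charpoly0.
have hs : Num.sg (char_poly M).[0] = 1.
  rewrite (@sgp_pinftyP R 0 (char_poly M)).
  - by rewrite /sgp_pinfty (monicP (char_poly_monic M)) sgr1.
  - move=> x; rewrite in_itv /= andbT; exact: h.
  - by rewrite in_itv /= lexx.
by move/eqP: hs; rewrite sgr_cp0.
Qed.

Lemma rho_neg_det M : spectral_abscissa M < 0 -> 0 < \det (- M).
Proof.
move=> /rho_lt0P h; apply: detpos => x x0; apply/negP => /eig_real /h /=.
by rewrite ltNge x0.
Qed.

Lemma det_neg_rho M : \det (- M) < 0 -> 0 < spectral_abscissa M.
Proof.
rewrite -charpoly0 => h.
have lc : 0 < lead_coef (char_poly M) by rewrite (monicP (char_poly_monic M)).
have [T0 hT] := poly_pinfty_gt_lc lc.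
have hT1 : 0 < (char_poly M).[Num.max T0 0].
  by apply: lt_le_trans lc _; apply: hT; rewrite le_max lexx.
have h0 : 0 <= Num.max T0 0 by rewrite le_max lexx orbT.
have hm : (char_poly M).[0] <= 0 <= (char_poly M).[Num.max T0 0] by rewrite !ltW.
have [x xin rx] := poly_ivt h0 hm.
have x0 : 0 < x.
  move/andP: xin => [xin _]; rewrite lt_neqAle xin andbT; apply/eqP => ex.
  by move: rx; rewrite -ex /root (lt_eqF h).
apply: (rho_gt0 (eig_real rx)) => /=; exact: x0.
Qed.

End Eigs.
Section NegDef.
Variable R : realType.
Local Notation C := (R[i]).
Variable n : nat.
Implicit Types M : 'M[R]_n.

Definition Qf M (x : 'I_n -> R) : R := \sum_i \sum_j x i * M i j * x j.

Lemma ReD : {morph (@complex.Re R) : a b / a + b}.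
Proof. by case=> ? ? [] ? ?. Qed.
Lemma ImD : {morph (@complex.Im R) : a b / a + b}.
Proof. by case=> ? ? [] ? ?. Qed.

Lemma negdef_eigs M :
  (forall x : 'I_n -> R, (exists i, x i != 0) -> Qf M x < 0) ->
  forall z, z \in eigs M -> complex.Re z < 0.
Proof.
move=> hneg z; rewrite mem_eigs /pc map_char_poly -eigenvalue_root_char.
move=> /eigenvalueP [v hv vn0].
pose xr i := complex.Re (v 0 i); pose yi i := complex.Im (v 0 i).
have hQ x : Qf M x <= 0.
  case: (boolP [exists i, x i != 0]) => [/existsP /hneg /ltW //|hx].
  rewrite /Qf big1 // => i _; rewrite big1 // => j _.
  have -> : x i = 0 by apply/eqP; apply: contraT => hi; case/existsP: hx; exists i.
  by rewrite !mul0r.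
have hj j : \sum_i v 0 i * (M i j)%:C%C = z * v 0 j.
  have := congr1 (fun A : 'M_(1, n) => A 0 j) hv; rewrite /= !mxE => <-.
  by apply: eq_bigr => i _; rewrite mxE.
have hre j : \sum_i xr i * M i j = complex.Re z * xr j - complex.Im z * yi j.
  have := congr1 (@complex.Re R) (hj j); rewrite (big_morph _ ReD (erefl : complex.Re (0:C) = 0)) => e.
  rewrite (eq_bigr (fun i => complex.Re (v 0 i * (M i j)%:C%C))); last first.
    by move=> i _; rewrite /xr /yi; case: (v 0 i) => c d /=; rewrite ?mulr0 ?subr0 ?add0r ?addr0.
  rewrite e /xr /yi; case: z {hv hj e} => a b; case: (v 0 j) => c d /=.
  by rewrite ?opprK; ring.
have him j : \sum_i yi i * M i j = complex.Re z * yi j + complex.Im z * xr j.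
  have := congr1 (@complex.Im R) (hj j); rewrite (big_morph _ ImD (erefl : complex.Im (0:C) = 0)) => e.
  rewrite (eq_bigr (fun i => complex.Im (v 0 i * (M i j)%:C%C))); last first.
    by move=> i _; rewrite /xr /yi; case: (v 0 i) => c d /=; rewrite ?mulr0 ?subr0 ?add0r ?addr0.
  rewrite e /xr /yi; case: z {hv hj e hre} => a b; case: (v 0 j) => c d /=.
  by rewrite ?opprK; ring.
have sw x : Qf M x = \sum_j (\sum_i x i * M i j) * x j.
  by rewrite /Qf exchange_big; apply: eq_bigr => j _; rewrite mulr_suml.
have key : Qf M xr + Qf M yi = complex.Re z * \sum_j (xr j ^+ 2 + yi j ^+ 2).
  rewrite !sw -big_split mulr_sumr; apply: eq_bigr => j _ /=; rewrite hre him; ring.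
have [i vi] : exists i, v 0 i != 0.
  apply/existsP; apply: contraT => /existsPn h; case/negP: vn0; apply/eqP/matrixP => a b.
  by rewrite ord1 mxE; apply/eqP; rewrite -[_ == _]negbK h.
have hlt : Qf M xr + Qf M yi < 0.
  have : (xr i != 0) || (yi i != 0).
    rewrite /xr /yi; move: vi; case: (v 0 i) => c d /=.
    by apply: contraNT; rewrite negb_or !negbK => /andP[/eqP -> /eqP ->].
  case/orP => h.
  - have h1 : Qf M xr < 0 by apply: hneg; exists i.
    have := hQ yi; lra.
  - have h1 : Qf M yi < 0 by apply: hneg; exists i.
    have := hQ xr; lra.
have S0 : 0 <= \sum_j (xr j ^+ 2 + yi j ^+ 2) by apply: sumr_ge0 => j _; rewrite addr_ge0 ?sqr_ge0.
rewrite ltNge; apply/negP => hz.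
by move: hlt; rewrite key ltNge mulr_ge0.
Qed.
End NegDef.
Section Large.
Variable R : realType.
Variable n : nat.
Implicit Types M N : 'M[R]_n.

Lemma QfD M N x : Qf (M + N) x = Qf M x + Qf N x.
Proof.
rewrite /Qf -big_split; apply: eq_bigr => i _ /=; rewrite -big_split; apply: eq_bigr => j _ /=.
by rewrite mxE; ring.
Qed.

Lemma QfZ c M x : Qf (c *: M) x = c * Qf M x.
Proof.
rewrite /Qf mulr_sumr; apply: eq_bigr => i _; rewrite mulr_sumr; apply: eq_bigr => j _.
by rewrite mxE; ring.
Qed.

Lemma Qf_diag (a : 'rV[R]_n) x : Qf (diag_mx a) x = \sum_i a 0 i * x i ^+ 2.
Proof.
apply: eq_bigr => i _; rewrite (bigD1 i) //= big1 ?addr0.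
  by rewrite mxE eqxx mulr1n; ring.
by move=> j /negPf hj; rewrite mxE eq_sym hj mulr0n mulr0 mul0r.
Qed.

Lemma sq_le_sum (x : 'I_n -> R) i : x i ^+ 2 <= \sum_j x j ^+ 2.
Proof. by rewrite (bigD1 i) //= lerDl sumr_ge0 // => j _; rewrite sqr_ge0. Qed.

Lemma Qf_bound N x : Qf N x <= 2 * (\sum_i \sum_j `|N i j|) * \sum_j x j ^+ 2.
Proof.
rewrite /Qf [2 * _]mulrC -mulrA mulr_suml; apply: ler_sum => i _; rewrite mulr_suml; apply: ler_sum => j _.
have hi := sq_le_sum x i; have hj := sq_le_sum x j.
move: hi hj; set S := \sum_j x j ^+ 2 => hi hj.
have e1 : 0 <= x i ^+ 2 + x j ^+ 2 - 2 * (x i * x j).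
  by have := sqr_ge0 (x i - x j); rewrite !expr2 => h; nra.
have e2 : 0 <= x i ^+ 2 + x j ^+ 2 + 2 * (x i * x j).
  by have := sqr_ge0 (x i + x j); rewrite !expr2 => h; nra.
have h1 : x i * x j <= S * 2 by lra.
have h2 : - (S * 2) <= x i * x j by lra.
have hN := ler_norm (N i j); have hN' := ler_norm (- N i j); rewrite normrN in hN'.
have h0 := normr_ge0 (N i j).
have -> : x i * N i j * x j = N i j * (x i * x j) by ring.
nra.
Qed.

Lemma qform_delta (J : 'M[R]_n) i : qform J (delta_mx i 0) = J i i.
Proof.
rewrite /qform trmx_delta -rowE -colE !mxE.
by [].
Qed.

End Large.
Section Large2.
Variable R : realType.
Variable n : nat.

Lemma sum_ge_term (I : finType) (F : I -> R) i : (forall j, 0 <= F j) -> F i <= \sum_j F j.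
Proof. by move=> h; rewrite (bigD1 i) //= lerDl sumr_ge0. Qed.

Lemma large_k (N : 'M[R]_n) (a b : 'rV[R]_n) : (0 < n)%N -> A2 (diag_mx a) (diag_mx b) ->
  forall k0 : R, exists k, k0 < k /\
    spectral_abscissa (N + k^+2 *: diag_mx a + k^+4 *: diag_mx b) < 0.
Proof.
move=> n0 [_ _ _ hsd [kb hkb]] k0.
have hb i : b 0 i <= 0.
  by have := hsd (delta_mx i 0); rewrite qform_delta mxE eqxx mulr1n.
have hc i : a 0 i * kb^+2 + b 0 i * kb^+4 < 0.
  have dn0 : (delta_mx i 0 : 'cV[R]_n) != 0.
    apply/eqP => /matrixP /(_ i 0); rewrite !mxE !eqxx /= => /eqP; by rewrite oner_eq0.
  have := hkb _ dn0; rewrite qform_delta !mxE eqxx !mulr1n.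
  by rewrite [a 0 i * _]mulrC [b 0 i * _]mulrC.
pose s0 := kb ^+ 2.
have hs0 : 0 < s0.
  rewrite lt_def sqr_ge0 andbT; apply/eqP => e.
  have := hc (Ordinal n0); rewrite -/s0 e (_ : kb ^+ 4 = s0 ^+ 2); last by rewrite /s0 -exprM.
  by rewrite e expr0n /= !mulr0 addr0 ltxx.
have hk4 : kb ^+ 4 = s0 ^+ 2 by rewrite /s0 -exprM.
pose K := \sum_i \sum_j `|N i j|.
have K0 : 0 <= K by apply: sumr_ge0 => i _; apply: sumr_ge0 => j _.
have hNb x : Qf N x <= 2 * K * \sum_j x j ^+ 2 by exact: Qf_bound.
clearbody K.
pose cc i := a 0 i * s0 + b 0 i * s0 ^+ 2.
have hcc i : cc i < 0 by have := hc i; rewrite /cc hk4.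
have kb0 : 0 < `|kb| by rewrite normr_gt0; apply/eqP => e; move: hs0; rewrite /s0 e expr0n ltxx.
pose mu := 1 + `|k0| / `|kb| + \sum_i (2 * K + 1) / (- cc i).
have hterm i : 0 <= (2 * K + 1) / (- cc i).
  by rewrite divr_ge0 // ?oppr_ge0 ?ltW ?hcc //; lra.
have hsum0 : 0 <= \sum_i (2 * K + 1) / (- cc i) by apply: sumr_ge0.
have hq0 : 0 <= `|k0| / `|kb| by rewrite divr_ge0.
have mu1 : 1 <= mu by rewrite /mu; lra.
have hmu i : 2 * K + 1 <= mu * (- cc i).
  have h1 := sum_ge_term i hterm.
  have : (2 * K + 1) / (- cc i) <= mu by rewrite /mu; lra.
  rewrite ler_pdivrMr ?oppr_gt0 //.
exists (mu * `|kb|); split.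
  have : `|k0| < mu * `|kb|.
    have -> : mu * `|kb| = `|kb| + `|k0| + (\sum_i (2 * K + 1) / (- cc i)) * `|kb|.
      by rewrite /mu !mulrDl mul1r mulfVK ?gt_eqF.
    have := mulr_ge0 hsum0 (ltW kb0); lra.
  by apply: le_lt_trans; apply: ler_norm.
have hk2 : (mu * `|kb|) ^+ 2 = mu ^+ 2 * s0 by rewrite exprMn real_normK ?num_real.
have hk4' : (mu * `|kb|) ^+ 4 = (mu ^+ 2 * s0) ^+ 2 by rewrite -hk2 -exprM.
have he i : a 0 i * (mu * `|kb|) ^+ 2 + b 0 i * (mu * `|kb|) ^+ 4 <= - (2 * K + 1).
  rewrite hk2 hk4'.
  have hcci := hcc i; have hbi := hb i; have hmui := hmu i.
  have s2 : 0 < s0 ^+ 2 by rewrite exprn_gt0.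
  have hbs : b 0 i * s0 ^+ 2 <= 0 by rewrite mulr_le0_ge0 // ltW.
  have l1 : mu ^+ 2 <= mu ^+ 2 * mu ^+ 2.
    by rewrite ler_pMr ?exprn_gt0 ?(lt_le_trans ltr01) // expr_ge1 // (le_trans ler01).
  have l2 : mu <= mu ^+ 2 by rewrite expr2 ler_pMr ?(lt_le_trans ltr01).
  have -> : a 0 i * (mu ^+ 2 * s0) + b 0 i * (mu ^+ 2 * s0) ^+ 2
      = mu ^+ 2 * (a 0 i * s0) + (mu ^+ 2 * mu ^+ 2) * (b 0 i * s0 ^+ 2) by ring.
  have t1 : (mu ^+ 2 * mu ^+ 2) * (b 0 i * s0 ^+ 2) <= mu ^+ 2 * (b 0 i * s0 ^+ 2).
    by rewrite ler_wnM2r.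
  have t2 : mu ^+ 2 * cc i <= mu * cc i by rewrite ler_wnM2r // ltW.
  move: t1 t2 hmui; rewrite /cc; nra.
apply: (@rho_lt0 R n _ n0). apply: negdef_eigs => x [i xi].
rewrite !QfD !QfZ !Qf_diag.
have hS : 0 < \sum_j x j ^+ 2.
  apply: lt_le_trans (sq_le_sum x i); by rewrite exprn_even_gt0.
have hN := hNb x.
have hD : (mu * `|kb|) ^+ 2 * (\sum_i a 0 i * x i ^+ 2) + (mu * `|kb|) ^+ 4 * (\sum_i b 0 i * x i ^+ 2)
    <= - (2 * K + 1) * \sum_j x j ^+ 2.
  rewrite !mulr_sumr -big_split /=; apply: ler_sum => j _.
  have h := ler_wpM2r (sqr_ge0 (x j)) (he j); move: h.
  set k := mu * `|kb|; set y := x j ^+ 2; set A := a 0 j; set B := b 0 j; move=> h; lra.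
move: hD hN hS K0; set S := \sum_j x j ^+ 2; nra.
Qed.
End Large2.
Section Rank1.
Variable R : realType.
Variable n : nat.

Lemma det_row_affine m (A0 A1 : 'M[R]_m) (F : R -> 'M[R]_m) i0 :
  (forall t r j, r != i0 -> F t r j = A0 r j) ->
  (forall r j, r != i0 -> A1 r j = A0 r j) ->
  (forall t j, F t i0 j = A0 i0 j + t * A1 i0 j) ->
  forall t, \det (F t) = \det A0 + t * \det A1.
Proof.
move=> hF h1 hrow t; rewrite -[\det A0]mul1r.
apply: (determinant_multilinear (i0 := i0)).
- by apply/rowP => j; rewrite !mxE hrow mul1r.
- by apply/matrixP => i j; rewrite !mxE hF // eq_sym neq_lift.
- by apply/matrixP => i j; rewrite !mxE h1 ?hF // eq_sym neq_lift.
Qed.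

Lemma det_rank1 (N0 : 'M[R]_n) (u : 'cV[R]_n) (v : 'rV[R]_n) :
  exists c, forall t, \det (N0 + t *: (u *m v)) = \det N0 + t * c.
Proof.
pose Bk t : 'M[R]_(n + 1) := block_mx N0 u (- t *: v) 1.
have h1 t : \det (N0 + t *: (u *m v)) = \det (Bk t).
  have e : block_mx 1 (- u) 0 1 *m Bk t = block_mx (N0 + t *: (u *m v)) 0 (- t *: v) 1.
    by rewrite /Bk mulmx_block !mul1mx !mul0mx !mulmx1 !add0r mulNmx scalemxAr scaleNr mulmxN opprK subrr.

  have := congr1 determinant e; rewrite det_lblock det1 mulr1 => <-.
  by rewrite det_mulmx det_ublock !det1 !mul1r.
pose i0 : 'I_(n + 1) := rshift n ord0.
have key : forall t, \det (Bk t) = \det (Bk 0) + t * \det (block_mx N0 u (- v) (0 : 'M_1)).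
  have := (det_row_affine (F := Bk) (A0 := Bk 0) (A1 := block_mx N0 u (- v) (0 : 'M_1)) (i0 := i0)). apply.
  - move=> t r j; case: (split_ordP r) => k -> hr; last first.
      by rewrite ord1 in hr; case/negP: hr.
    by case: (split_ordP j) => l ->; rewrite ?block_mxEul ?block_mxEur.
  - move=> r j; case: (split_ordP r) => k -> hr; last first.
      by rewrite ord1 in hr; case/negP: hr.
    by case: (split_ordP j) => l ->; rewrite ?block_mxEul ?block_mxEur.
  - move=> t j; rewrite /i0; case: (split_ordP j) => l ->.
      by rewrite !block_mxEdl !mxE; ring.
    by rewrite !block_mxEdr !mxE; ring.
exists (\det (block_mx N0 u (- v) (0 : 'M_1))) => t.
rewrite h1 key; congr (_ + _).
by rewrite -h1 scale0r addr0.
Qed.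
End Rank1.
Section Vertex.
Variable R : realType.

Definition upd p (x : 'rV[R]_p) (j : 'I_p) (t : R) : 'rV[R]_p :=
  \row_l (if l == j then t else x 0 l).

Lemma upd_id p (x : 'rV[R]_p) j : upd x j (x 0 j) = x.
Proof. by apply/rowP => l; rewrite !mxE; case: eqP => // ->. Qed.

Definition affine_coords p (G : 'rV[R]_p -> R) :=
  forall x j, exists al be, forall t, G (upd x j t) = al + t * be.

Lemma vertex_min p (lo hi : 'rV[R]_p) (G : 'rV[R]_p -> R) :
  affine_coords G -> forall x, in_box lo hi x ->
  exists s, G (vertex lo hi s) <= G x.
Proof.
move=> hG x hx.
have main : forall l, (l <= p)%N -> exists y, [/\ in_box lo hi y,
    (forall j : 'I_p, (j < l)%N -> y 0 j = lo 0 j \/ y 0 j = hi 0 j) & G y <= G x].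
  elim => [|l IH] hl.
    by exists x; split => // j.
  have [y [hy hyl hGy]] := IH (ltnW hl).
  pose j : 'I_p := Ordinal hl.
  have [al [be hab]] := hG y j.
  have hyj := hy j.
  pose t := if 0 <= be then lo 0 j else hi 0 j.
  exists (upd y j t); split.
  - move=> l'; rewrite !mxE; case: eqP => [->|_]; last exact: hy.
    by rewrite /t; case: ifP => _; move/andP: hyj => [h1 h2]; rewrite ?lexx ?(le_trans h1 h2).
  - move=> j' hj'; rewrite !mxE; case: eqP => [->|hne]; first by rewrite /t; case: ifP; [left|right].
    apply: hyl; move: hj'; rewrite ltnS leq_eqVlt => /orP[/eqP e|//].
    by case: hne; apply: val_inj.
  - apply: le_trans hGy; have := hab (y 0 j); rewrite upd_id => ->; rewrite hab lerD2l /t.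
    move/andP: hyj => [h1 h2].
    case: ifP => hb; first by rewrite ler_wpM2r.
    by rewrite ler_wnM2r // ltW // ltNge hb.
have [y [hy hyl hGy]] := main p (leqnn p).
exists [ffun j => y 0 j == hi 0 j].
suff -> : vertex lo hi [ffun j => y 0 j == hi 0 j] = y by [].
apply/rowP => j; rewrite !mxE ffunE.
case: eqP => [//|hne]; case: (hyl j (ltn_ord j)) => // e.
Qed.

Lemma vertex_max p (lo hi : 'rV[R]_p) (G : 'rV[R]_p -> R) :
  affine_coords G -> forall x, in_box lo hi x ->
  exists s, G x <= G (vertex lo hi s).
Proof.
move=> hG x hx.
have hG' : affine_coords (fun y => - G y).
  move=> y j; have [al [be h]] := hG y j; exists (- al), (- be) => t.
  by rewrite h; ring.
have [s hs] := vertex_min hG' hx; exists s; by rewrite -lerN2.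
Qed.

Lemma vertex_in_box p (lo hi : 'rV[R]_p) s :
  (forall j, lo 0 j <= hi 0 j) -> in_box lo hi (vertex lo hi s).
Proof. by move=> h j; rewrite !mxE; case: (s j); rewrite ?lexx h. Qed.

Lemma diag_upd p (a : 'rV[R]_p) j t :
  diag_mx (upd a j t) = diag_mx (upd a j 0) + t *: ((delta_mx j (0 : 'I_1) : 'cV_p) *m delta_mx 0 j).
Proof.
rewrite mul_delta_mx; apply/matrixP => r c; rewrite !mxE.
case: (eqVneq r c) => [<-|hrc].
  by rewrite !mulr1n andbb; case: (r == j) => /=; rewrite ?mulr1 ?mulr0 ?add0r ?addr0.
have -> : (r == j) && (c == j) = false.
  by apply/negP => /andP [/eqP e1 /eqP e2]; move: hrc; rewrite e1 e2 eqxx.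
by rewrite !mulr0n mulr0 addr0.
Qed.

Lemma detN_rank1 n (F : R -> 'M[R]_n) (M0 : 'M[R]_n) (u : 'cV[R]_n) (v : 'rV[R]_n) :
  (forall t, F t = M0 + t *: (u *m v)) ->
  exists al be, forall t, \det (- F t) = al + t * be.
Proof.
move=> hF; have [c hc] := det_rank1 (- M0) (- u) v.
exists (\det (- M0)), c => t; rewrite hF -hc; congr (\det _).
by rewrite opprD mulNmx scalerN.
Qed.

End Vertex.
Section Sys.
Variables (R : realType) (n m : nat) (B : 'M[int]_(n, m)) (C : 'M[int]_(m, n)).

Definition Fd (k : R) d a b := \det (- sysmx B C d a b k).

Lemma zadd1 (V : zmodType) (a x k2 k4 y : V) : x = y -> a + x + k2 + k4 = a + k2 + k4 + y.
Proof. by move=> ->; rewrite -!addrA; congr (_ + _); rewrite addrC -addrA. Qed.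
Lemma zadd2 (V : zmodType) (a x2 x k4 y : V) : x = y -> a + (x2 + x) + k4 = a + x2 + k4 + y.
Proof. by move=> ->; rewrite -!addrA; congr (_ + _); congr (_ + _); rewrite addrC. Qed.
Lemma zadd3 (V : zmodType) (a k2 x4 x y : V) : x = y -> a + k2 + (x4 + x) = a + k2 + x4 + y.
Proof. by move=> ->; rewrite -!addrA. Qed.

Lemma scale_swap (k t : R) p (e : 'cV[R]_p) (f : 'rV[R]_p) :
  k *: (t *: (e *m f)) = t *: ((k *: e) *m f).
Proof. by rewrite scalerA mulrC -scalerA scalemxAl. Qed.

Lemma aff_d k a b : affine_coords (fun d => Fd k d a b).
Proof.
move=> d j.
apply: (detN_rank1 (F := fun t => sysmx B C (upd d j t) a b k)
   (M0 := sysmx B C (upd d j 0) a b k)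
   (u := intmx R B *m delta_mx j (0 : 'I_1)) (v := delta_mx 0 j *m intmx R C)) => t.
rewrite /sysmx diag_upd mulmxDr mulmxDl; apply: zadd1.
by rewrite -scalemxAr -scalemxAl !mulmxA.
Qed.

Lemma aff_a k d b : affine_coords (fun a => Fd k d a b).
Proof.
move=> a j.
apply: (detN_rank1 (F := fun t => sysmx B C d (upd a j t) b k)
   (M0 := sysmx B C d (upd a j 0) b k)
   (u := k ^+ 2 *: (delta_mx j (0 : 'I_1) : 'cV[R]_n)) (v := delta_mx 0 j)) => t.
rewrite /sysmx diag_upd scalerDr; apply: zadd2.
exact: scale_swap.
Qed.

Lemma aff_b k d a : affine_coords (fun b => Fd k d a b).
Proof.
move=> b j.
apply: (detN_rank1 (F := fun t => sysmx B C d a (upd b j t) k)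
   (M0 := sysmx B C d a (upd b j 0) k)
   (u := k ^+ 4 *: (delta_mx j (0 : 'I_1) : 'cV[R]_n)) (v := delta_mx 0 j)) => t.
rewrite /sysmx diag_upd scalerDr; apply: zadd3.
exact: scale_swap.
Qed.

End Sys.
Section Psi.
Variables (R : realType) (n m : nat) (B : 'M[int]_(n, m)) (C : 'M[int]_(m, n)).
Variables (dlo dhi : 'rV[R]_m) (alo ahi blo bhi : 'rV[R]_n).

Lemma fin_max (I : finType) (F : I -> R) (i0 : I) : exists i, forall j, F j <= F i.
Proof.
case: (bigmax_seq (enum I) F (F i0)) => h1 h2 [e|[i _ e]].
  by exists i0 => j; rewrite -e; apply: h2; rewrite mem_enum.
by exists i => j; rewrite -e; apply: h2; rewrite mem_enum.
Qed.

Lemma fin_min (I : finType) (F : I -> R) (i0 : I) : exists i, forall j, F i <= F j.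
Proof. by have [i hi] := fin_max (fun j => - F j) i0; exists i => j; rewrite -lerN2. Qed.

Lemma sup_max (S : set R) x : S x -> (forall y, S y -> y <= x) -> sup S = x.
Proof.
move=> Sx h; apply/le_anti/andP; split.
  by apply: ge_sup; [exists x | move=> y /h].
by apply: ub_le_sup => //; exists x => y /h.
Qed.

Lemma inf_min (S : set R) x : S x -> (forall y, S y -> x <= y) -> inf S = x.
Proof.
move=> Sx h; apply/le_anti/andP; split; last first.
  by apply: lb_le_inf; [exists x | move=> y /h].
by apply: ge_inf => //; exists x => y /h.
Qed.

Hypothesis hd : forall j, dlo 0 j <= dhi 0 j.
Hypothesis ha : forall j, alo 0 j <= ahi 0 j.
Hypothesis hb : forall j, blo 0 j <= bhi 0 j.

Definition fv (k : R) (v : {ffun 'I_m -> bool} * {ffun 'I_n -> bool} * {ffun 'I_n -> bool}) :=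
  Fd B C k (vertex dlo dhi v.1.1) (vertex alo ahi v.1.2) (vertex blo bhi v.2).

Lemma F_vmin k d a b : in_box dlo dhi d -> in_box alo ahi a -> in_box blo bhi b ->
  exists v, fv k v <= Fd B C k d a b.
Proof.
move=> h1 h2 h3.
have [sd e1] := vertex_min (aff_d B C k a b) h1.
have [sa e2] := vertex_min (aff_a B C k (vertex dlo dhi sd) b) h2.
have [sb e3] := vertex_min (aff_b B C k (vertex dlo dhi sd) (vertex alo ahi sa)) h3.
exists (sd, sa, sb); rewrite /fv /=.
exact: le_trans e3 (le_trans e2 e1).
Qed.

Lemma F_vmax k d a b : in_box dlo dhi d -> in_box alo ahi a -> in_box blo bhi b ->
  exists v, Fd B C k d a b <= fv k v.
Proof.
move=> h1 h2 h3.
have [sd e1] := vertex_max (aff_d B C k a b) h1.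
have [sa e2] := vertex_max (aff_a B C k (vertex dlo dhi sd) b) h2.
have [sb e3] := vertex_max (aff_b B C k (vertex dlo dhi sd) (vertex alo ahi sa)) h3.
exists (sd, sa, sb); rewrite /fv /=.
exact: le_trans e1 (le_trans e2 e3).
Qed.

Lemma psi_props k : exists vmin vmax,
  [/\ Psi_minus B C dlo dhi alo ahi blo bhi k = fv k vmin,
      Psi_plus B C dlo dhi alo ahi blo bhi k = fv k vmax,
      (forall v, fv k vmin <= fv k v <= fv k vmax) &
      (forall d a b, in_box dlo dhi d -> in_box alo ahi a -> in_box blo bhi b ->
         fv k vmin <= Fd B C k d a b <= fv k vmax)].
Proof.
pose v0 : {ffun 'I_m -> bool} * {ffun 'I_n -> bool} * {ffun 'I_n -> bool} :=
  ([ffun=> false], [ffun=> false], [ffun=> false]).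
have [vmin hmin] := fin_min (fv k) v0.
have [vmax hmax] := fin_max (fv k) v0.
have hall d a b : in_box dlo dhi d -> in_box alo ahi a -> in_box blo bhi b ->
    fv k vmin <= Fd B C k d a b <= fv k vmax.
  move=> h1 h2 h3; apply/andP; split.
    by have [v hv] := F_vmin k h1 h2 h3; exact: le_trans (hmin v) hv.
  by have [v hv] := F_vmax k h1 h2 h3; exact: le_trans hv (hmax v).
have mem v : det_values B C dlo dhi alo ahi blo bhi k (fv k v).
  rewrite /det_values; exists (vertex dlo dhi v.1.1), (vertex alo ahi v.1.2), (vertex blo bhi v.2).
  by split; [apply: vertex_in_box | apply: vertex_in_box | apply: vertex_in_box |].
exists vmin, vmax; split => //.
- apply: inf_min => // y [d [a [b [h1 h2 h3 ->]]]].
  by have /andP[] := hall d a b h1 h2 h3.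
- apply: sup_max => // y [d [a [b [h1 h2 h3 ->]]]].
  by have /andP[] := hall d a b h1 h2 h3.
- by move=> v; rewrite hmin hmax.
Qed.

End Psi.
Section PolyFam.
Variable R : realType.
Variable n : nat.
Variables (N A Bm : 'M[R]_n).

Definition Mk (k : R) : 'M[R]_n := N + k ^+ 2 *: A + k ^+ 4 *: Bm.

Definition MP : 'M[{poly R}]_n :=
  \matrix_(i, j) ((N i j)%:P + 'X^2 * (A i j)%:P + 'X^4 * (Bm i j)%:P).

Lemma MP_eval k : map_mx (horner_eval k) MP = Mk k.
Proof. by apply/matrixP => i j; rewrite !mxE /= horner_evalE !hornerE. Qed.

Lemma charMk k i : (char_poly (Mk k))`_i = ((char_poly MP)`_i).[k].
Proof. by rewrite -MP_eval -map_char_poly coef_map. Qed.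

Lemma detMk k : \det (- Mk k) = (\det (- MP)).[k].
Proof. by rewrite -MP_eval -map_mxN det_map_mx. Qed.

Lemma Mk0 : Mk 0 = N.
Proof. by rewrite /Mk !expr0n /= !scale0r !addr0. Qed.

End PolyFam.

Section PolyCont.
Variable R : realType.

Definition Sq (q : {poly R}) : R := \sum_(j < size q) `|q`_j|.

Lemma Sq_ge0 q : 0 <= Sq q.
Proof. by apply: sumr_ge0. Qed.

Lemma poly_bound q (k : R) : 0 <= k <= 1 -> `|q.[k]| <= Sq q.
Proof.
move=> /andP[k0 k1]; rewrite horner_coef (le_trans (ler_norm_sum _ _ _)) //.
apply: ler_sum => i _; rewrite normrM normrX ler_piMr //.
by rewrite exprn_ile1 ?normr_ge0 // ger0_norm.
Qed.

Lemma poly_lip q (k : R) : 0 <= k <= 1 -> `|q.[k] - q.[0]| <= k * Sq q.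
Proof.
move=> /andP[k0 k1]; rewrite !horner_coef -sumrB (le_trans (ler_norm_sum _ _ _)) //.
rewrite /Sq mulr_sumr; apply: ler_sum => i _.
rewrite -mulrBr normrM mulrC ler_wpM2r //.
case: (nat_of_ord i) => [|j]; first by rewrite !expr0 subrr normr0.
rewrite expr0n /= subr0 ger0_norm ?exprn_ge0 // exprS.
by rewrite ler_piMr // exprn_ile1.
Qed.

End PolyCont.
Section Roots.
Variable R : realType.
Local Notation C := (R[i]).

Lemma nr_sum_ge0 (I : finType) (F : I -> C) : 0 <= \sum_i nr (F i).
Proof. by apply: sumr_ge0 => i _; apply: nr_ge0. Qed.

Lemma cauchyC (P : {poly C}) d : size P = d.+1 -> P`_d = 1 ->
  forall r, root P r -> nr r <= 1 + \sum_(i < d) nr (P`_i).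
Proof.
move=> hs hd r /rootP hr.
have T0 := nr_sum_ge0 (fun i : 'I_d => P`_i).
case: (leP (nr r) 1) => h1; first by lra.
have hP : P.[r] = r ^+ d + \sum_(i < d) P`_i * r ^+ i.
  by rewrite horner_coef hs big_ord_recr /= hd mul1r addrC.
move: hP; rewrite hr; case: d hs hd T0 => [|d] hs hd T0.
  by rewrite big_ord0 expr0 addr0 => /eqP; rewrite eq_sym oner_eq0.
move=> /eqP; rewrite eq_sym addr_eq0 => /eqP e.
have : nr r ^+ d.+1 <= (\sum_(i < d.+1) nr (P`_i)) * nr r ^+ d.
  rewrite -nrX e nrN (le_trans (nr_sum _ _)) // mulr_suml; apply: ler_sum => i _.
  rewrite nrM nrX ler_wpM2l ?nr_ge0 // ler_eXn2l //; last by rewrite -ltnS.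
rewrite exprSr mulrC => hle.
have hpos : 0 < nr r ^+ d by rewrite exprn_gt0 // (lt_trans ltr01).
rewrite (ler_pM2r hpos) in hle; lra.
Qed.

Lemma coef_prod_bound (t : seq C) (R0 : R) : 0 <= R0 -> (forall z, z \in t -> nr z <= R0) ->
  forall i, nr ((\prod_(z <- t) ('X - z%:P))`_i) <= (1 + R0) ^+ size t.
Proof.
move=> R00; elim: t => [|z t IH] ht i.
  rewrite big_nil coefC expr0; case: eqP => _; first by rewrite nr_real normr1.
  by rewrite nr_real normr0.
rewrite big_cons mulrBl coefB coefXM coefCM /=.
have hz : nr z <= R0 by apply: ht; rewrite inE eqxx.
have IH' : forall j, nr ((\prod_(z0 <- t) ('X - z0%:P))`_j) <= (1 + R0) ^+ size t.
  by apply: IH => w wt; apply: ht; rewrite inE wt orbT.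
have hX : nr (if i == 0%N then 0 else (\prod_(z0 <- t) ('X - z0%:P))`_i.-1) <= (1 + R0) ^+ size t.
  case: (i == 0%N); last exact: IH'.
  by rewrite nr_real normr0 exprn_ge0 // addr_ge0.
apply: le_trans (nrB _ _) _; rewrite nrM exprS mulrDl mul1r lerD //.
by rewrite ler_pM ?nr_ge0.
Qed.

Lemma mem_rem_neq (T : eqType) (a b : T) (s : seq T) : b != a -> b \in s -> b \in rem a s.
Proof.
move=> hba; elim: s => [//|x s IH]; rewrite inE /=.
case: (eqVneq x a) => [->|hxa]; first by rewrite (negPf hba).
by rewrite inE; case/orP => [->//|/IH ->]; rewrite orbT.
Qed.

Lemma count_rem_le (T : eqType) (P : pred T) (a : T) (s : seq T) : a \in s -> P a ->
  count P s = (count P (rem a s)).+1.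
Proof.
elim: s => [//|x s IH]; rewrite inE /= => /orP [/eqP ->|ha] hP.
  by rewrite eqxx hP add1n.
case: (eqVneq x a) => [->|hxa]; first by rewrite hP add1n.
by rewrite /= IH // addnS.
Qed.

Lemma root_conj (p : {poly R}) (z : C) :
  root (map_poly (real_complex R) p) z -> root (map_poly (real_complex R) p) (z^*)%C.
Proof.
move=> /rootP h; apply/rootP.
have e : map_poly (@conjc R) (map_poly (real_complex R) p) = map_poly (real_complex R) p.
  by rewrite -map_poly_comp; apply: eq_map_poly => x /=; rewrite oppr0.
by rewrite -{1}e horner_map h rmorph0.
Qed.

End Roots.
Section Perturb.
Variable R : realType.
Local Notation C := (R[i]).
Variable n : nat.
Variables (N A Bm : 'M[R]_n).

Local Notation pk k := (char_poly (Mk N A Bm k)).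

Lemma ReB (u w : C) : complex.Re (u - w) = complex.Re u - complex.Re w.
Proof. by case: u => ? ?; case: w => ? ?. Qed.

Lemma coef_pc (M : 'M[R]_n) i : (pc M)`_i = ((char_poly M)`_i)%:C%C.
Proof. by rewrite /pc coef_map. Qed.

Lemma size_pc (M : 'M[R]_n) : size (pc M) = n.+1.
Proof. by rewrite /pc size_map_poly size_char_poly. Qed.

Lemma coefXsubCM (c : C) (h : {poly C}) i :
  (('X - c%:P) * h)`_i = (if i == 0%N then 0 else h`_i.-1) - c * h`_i.
Proof. by rewrite mulrBl coefB coefXM coefCM. Qed.

Lemma pos_at0 (p : {poly R}) : lead_coef p = 1 ->
  (forall x : R, 0 <= x -> ~~ root p x) -> 0 < p.[0].
Proof.
move=> hl h.
have hs : Num.sg p.[0] = 1.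
  rewrite (@sgp_pinftyP R 0 p).
  - by rewrite /sgp_pinfty hl sgr1.
  - move=> x; rewrite in_itv /= andbT; exact: h.
  - by rewrite in_itv /= lexx.
by move/eqP: hs; rewrite sgr_cp0.
Qed.

Lemma perturb : (0 < n)%N -> \det N = 0 ->
  count (fun z : C => complex.Re z < 0) (eigs N) = n.-1 ->
  exists del : R, 0 < del /\ forall k, 0 < k < del -> 0 < \det (- Mk N A Bm k) ->
    spectral_abscissa (Mk N A Bm k) < 0.
Proof.
move=> n0 detN0 hcount.
set Q := char_poly (MP N A Bm).
pose L := \sum_(i < n.+1) Sq (Q`_i).
have L0 : 0 <= L by apply: sumr_ge0 => i _; apply: Sq_ge0.
have SqL i : (i < n.+1)%N -> Sq (Q`_i) <= L.
  move=> hi; have := sum_ge_term (F := fun j : 'I_n.+1 => Sq (Q`_j)) (Ordinal hi).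
  by apply => j; apply: Sq_ge0.
have hcb k i : 0 <= k <= 1 -> (i < n.+1)%N -> `|(pk k)`_i| <= L.
  by move=> hk hi; rewrite charMk (le_trans (poly_bound _ hk)) // SqL.
have hcl k i : 0 <= k <= 1 -> (i < n.+1)%N -> `|(pk k)`_i - (char_poly N)`_i| <= k * L.
  move=> hk hi; rewrite -{2}(Mk0 N A Bm) !charMk (le_trans (poly_lip _ hk)) //.
  by rewrite ler_wpM2l ?SqL //; case/andP: hk.
pose R0 := 1 + n%:R * L.
have R01 : 1 <= R0 by rewrite /R0 lerDl mulr_ge0.
have hroot k r : 0 <= k <= 1 -> r \in eigs (Mk N A Bm k) -> nr r <= R0.
  move=> hk; rewrite mem_eigs => hr.
  have hn : (pc (Mk N A Bm k))`_n = 1.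
    have h1 := monicP (char_poly_monic (Mk N A Bm k)).
    by rewrite lead_coefE size_char_poly /= in h1; rewrite coef_pc h1.
  apply: le_trans (cauchyC (size_pc _) hn hr) _; rewrite lerD2l.
  have -> : n%:R * L = \sum_(i < n) L by rewrite sumr_const card_ord mulr_natl.
  apply: ler_sum => i _; rewrite coef_pc nr_real hcb //.
  by apply: (ltn_trans (ltn_ord i)).
have z0 : 0 \in eigs N.
  rewrite mem_eigs; apply/rootP; rewrite /pc -(rmorph0 (real_complex R)) horner_map charpoly0.
  by rewrite -scaleN1r detZ detN0 mulr0 rmorph0.
pose t0 := rem 0 (eigs N).
have ht0 : forall u, u \in t0 -> complex.Re u < 0.
  apply/allP; rewrite all_count; apply/eqP.
  have := permP (perm_to_rem z0) (fun z : C => complex.Re z < 0).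
  rewrite /= ltxx add0n hcount => <-.
  by rewrite size_rem // size_eigs.
pose q0 := \prod_(u <- t0) ('X - u%:P).
have hpcN : pc N = 'X * q0.
  by rewrite eigsE (big_rem 0 z0) /= subr0.
pose Q0 := \prod_(u <- t0) (- complex.Re u).
have Q0pos : 0 < Q0.
  by rewrite /Q0 big_seq; apply: prodr_gt0 => u hu; rewrite oppr_gt0 ht0.
have hq0 w : 0 <= complex.Re w -> Q0 <= nr (q0.[w]).
  move=> hw; rewrite /q0 /Q0 horner_prod nr_prod !big_seq; apply: ler_prod => u hu.
  rewrite hornerXsubC oppr_ge0 ltW ?ht0 //=.
  apply: le_trans (nr_Re _); rewrite ReB; lra.
have hc1N : Q0 <= `|(char_poly N)`_1|.
  rewrite -nr_real -coef_pc hpcN coefXM /= -horner_coef0; apply: hq0; by rewrite lexx.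
pose K1 := (n.+1)%:R * L * R0 ^+ n / Q0.
have R00 : 0 <= R0 by apply: le_trans R01; apply: ler01.
have K10 : 0 <= K1 by rewrite /K1 divr_ge0 ?mulr_ge0 ?exprn_ge0 // ltW.
pose G := (1 + R0) ^+ n.
have G0 : 0 <= G by rewrite /G exprn_ge0 // addr_ge0.
pose W := 3 * K1 * G + L + 1.
have W0 : 0 < W by rewrite /W; have := mulr_ge0 K10 G0; lra.
pose del := Num.min 1 (Num.min (1 / (K1 + 1)) (Q0 / W)).
exists del; split.
  by rewrite /del !lt_min ltr01 !divr_gt0 //=; lra.
move=> k /andP[k0 kdel] hdet.
move: kdel; rewrite /del !lt_min => /and3P[k1 kK kQ].
have hk : 0 <= k <= 1 by rewrite !ltW.
have kK1 : k * K1 <= 1.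
  by move: kK; rewrite ltr_pdivlMr ?mul1r; [lra | lra].
have kW : k * (3 * K1 * G + L) < Q0.
  move: kQ; rewrite ltr_pdivlMr // /W => h.
  by apply: le_lt_trans h; rewrite ler_wpM2l ?ltW //; lra.
set s := eigs (Mk N A Bm k).
have tiny r : r \in s -> 0 <= complex.Re r -> nr r <= k * K1.
  move=> rs hr.
  have hR := hroot k r hk rs.
  have /rootP rr : root (pc (Mk N A Bm k)) r by rewrite -mem_eigs.
  have e1 : (pc N).[r] = \sum_(i < n.+1) ((pc N)`_i - (pc (Mk N A Bm k))`_i) * r ^+ i.
    have -> : (pc N).[r] = (pc N).[r] - (pc (Mk N A Bm k)).[r] by rewrite rr subr0.
    rewrite (horner_coef (pc (Mk N A Bm k))) (horner_coef (pc N)) !size_pc -sumrB.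
    by apply: eq_bigr => i _; rewrite mulrBl.
  have e2 : nr ((pc N).[r]) <= (n.+1)%:R * (k * L) * R0 ^+ n.
    rewrite e1; apply: le_trans (nr_sum _ _) _.
    have -> : (n.+1)%:R * (k * L) * R0 ^+ n = \sum_(i < n.+1) (k * L * R0 ^+ n).
      by rewrite sumr_const card_ord mulr_natl mulrnAl.
    apply: ler_sum => i _; rewrite nrM nrX !coef_pc -rmorphB nr_real distrC.
    apply: ler_pM; rewrite ?normr_ge0 ?exprn_ge0 ?nr_ge0 ?hcl //.
    apply: le_trans (ler_weXn2l R01 (leq_ord i)).
    by rewrite lerXn2r // nnegrE ?nr_ge0.
  have e3 : nr r * Q0 <= nr ((pc N).[r]).
    by rewrite hpcN ['X * q0]mulrC hornerMX nrM [nr (q0.[r]) * _]mulrC ler_wpM2l ?nr_ge0 // hq0.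
  have e4 : (n.+1)%:R * (k * L) * R0 ^+ n = k * K1 * Q0.
    rewrite /K1; field; exact: lt0r_neq0.
  by rewrite -(ler_pM2r Q0pos) -e4 (le_trans e3 e2).
have hsz : size s = n by rewrite size_eigs.
have notwo r1 r2 : r1 \in s -> r2 \in rem r1 s -> 0 <= complex.Re r1 -> 0 <= complex.Re r2 -> False.
  move=> h1 h2 p1 p2.
  have t1 := tiny r1 h1 p1; have t2 := tiny r2 (mem_rem h2) p2.
  set g := \prod_(u <- rem r2 (rem r1 s)) ('X - u%:P).
  have hP : pc (Mk N A Bm k) = ('X - r1%:P) * (('X - r2%:P) * g).
    by rewrite eigsE (big_rem r1 h1) /= (big_rem r2 h2).
  have hg i : nr (g`_i) <= G.
    apply: le_trans (coef_prod_bound R00 _ i) _.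
      by move=> u /mem_rem /mem_rem hu; apply: hroot hk hu.
    apply: ler_weXn2l; first by lra.
    by rewrite (size_rem h2) (size_rem h1) hsz; apply: leq_trans (leq_pred _) (leq_pred _).
  have c1 : (pc (Mk N A Bm k))`_1 = - r2 * g`_0 - r1 * (g`_0 - r2 * g`_1).
    by rewrite hP !coefXsubCM /=; ring.
  have up : nr ((pc (Mk N A Bm k))`_1) <= 3 * (k * K1) * G.
    rewrite c1; apply: le_trans (nrB _ _) _; rewrite !nrM nrN.
    apply: le_trans (lerD (ler_wpM2l (nr_ge0 _) (hg 0%N)) (ler_wpM2l (nr_ge0 _) (nrB _ _))) _.
    rewrite nrM.
    have a0 := nr_ge0 r1; have b0 := nr_ge0 r2; have h0 := hg 0%N; have h1' := hg 1%N.
    have g00 := nr_ge0 (g`_0); have g10 := nr_ge0 (g`_1).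
    move: (nr r1) (nr r2) (nr (g`_0)) (nr (g`_1)) a0 b0 t1 t2 h0 h1' g00 g10 => a b x y a0 b0 t1' t2' h0 h1' g00 g10.
    move: (k * K1) kK1 t1' t2' => K kKa t1' t2'.
    have f1 : b * G <= K * G by rewrite ler_wpM2r.
    have f2 : a * x <= K * G by rewrite ler_pM.
    have f3 : b * y <= 1 * G by rewrite ler_pM //; lra.
    have f4 : a * (b * y) <= K * G by rewrite ler_pM ?mulr_ge0 // -[G]mul1r.
    rewrite mulrDr; lra.
  have low : Q0 - k * L <= nr ((pc (Mk N A Bm k))`_1).
    rewrite coef_pc nr_real.
    have hn1 : (1 < n.+1)%N by rewrite ltnS.
    have hh1 := hcl k 1%N hk hn1.
    have hh2 := lerB_dist ((char_poly N)`_1) ((pk k)`_1).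
    rewrite distrC in hh2; lra.
  have := mulr_ge0 K10 G0; lra.
apply: (@rho_lt0 R n _ n0) => r rs.
rewrite ltNge; apply/negP => hr.
case: (eqVneq r (r^*)%C) => [er|ner]; last first.
  have cs : (r^*)%C \in s.
    by rewrite /s mem_eigs /pc; apply: root_conj; rewrite -/(pc _) -mem_eigs.
  apply: (notwo r (r^*)%C rs _ hr _).
    by apply: mem_rem_neq => //; rewrite eq_sym.
  by move: hr; case: (r) => a b.
pose x := complex.Re r.
have rx : r = (x%:C)%C.
  by move: er; rewrite /x; case: (r) => a b /= /eqP; rewrite eq_complex /= eqxx /= => /eqP hb; congr Complex; lra.
have x0 : 0 <= x by [].
have hrest u : u \in rem r s -> complex.Re u < 0.
  by move=> hu; rewrite ltNge; apply/negP => hu0; apply: (notwo r u rs hu hr hu0).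
have rootx : root (pk k) x.
  move: rs; rewrite /s mem_eigs /pc rx => /rootP; rewrite horner_map => /eqP.
  by rewrite fmorph_eq0.
have [q hq] := factor_theorem _ _ rootx.
have Xr0 : ('X - r%:P : {poly C}) != 0 by rewrite polyXsubC_eq0.
have hmap : map_poly (real_complex R) q = \prod_(u <- rem r s) ('X - u%:P).
  apply: (mulIf Xr0).
  have e1 : pc (Mk N A Bm k) = map_poly (real_complex R) q * ('X - r%:P).
    by rewrite /pc hq rmorphM /= map_polyXsubC rx.
  by rewrite -e1 eigsE (big_rem r rs) mulrC.
have lq : lead_coef q = 1.
  have := monicP (char_poly_monic (Mk N A Bm k)).
  by rewrite hq lead_coefM lead_coefXsubC mulr1.
have nq y : 0 <= y -> ~~ root q y.
  move=> y0; apply/negP => /rootP hy.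
  have : (y%:C)%C \in rem r s.
    by rewrite -root_prod_XsubC -hmap; apply/rootP; rewrite horner_map hy rmorph0.
  by move/hrest; rewrite /= ltNge y0.
have qpos := pos_at0 lq nq.
have : (pk k).[0] <= 0.
  by rewrite hq hornerM hornerXsubC sub0r mulrN oppr_le0 mulr_ge0 // ltW.
by rewrite charpoly0 leNgt hdet.
Qed.

End Perturb.
Section Main.
Variable R : realType.

Lemma fin_min_pos (I : finType) (e : I -> R) (c : R) (i0 : I) : 0 < c -> (forall i, 0 < e i) ->
  exists d, [/\ 0 < d, d <= c & forall i, d <= e i].
Proof.
move=> c0 he; have [im him] := fin_min e i0.
exists (Num.min c (e im)); split.
- by rewrite lt_min c0 he.
- by rewrite ge_min lexx.
- by move=> i; rewrite ge_min (him i) orbT.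
Qed.

Lemma sign_right (q : {poly R}) :
  (exists h, 0 < h /\ forall y, 0 < y < h -> 0 < q.[y]) \/
  (exists h, 0 < h /\ forall y, 0 < y < h -> q.[y] <= 0).
Proof.
case: (eqVneq q 0) => [->|qn0].
  by right; exists 1; split => // y _; rewrite horner0.
have hnr : 0 < next_root q 0 1 by apply: next_root_gt.
have hs y : 0 < y < next_root q 0 1 -> Num.sg q.[y] = sgp_right q 0.
  move=> hy; apply: (@sgr_neighpr R 1 q 0 y); by rewrite /neighpr in_itv /=.
case: (eqVneq (sgp_right q 0) 1) => hc.
  left; exists (next_root q 0 1); split => // y hy.
  by have := hs y hy; rewrite hc => /eqP; rewrite sgr_cp0.
right; exists (next_root q 0 1); split => // y hy.
rewrite leNgt; apply/negP => hq.
by move: hc; rewrite -(hs y hy) gtr0_sg // eqxx.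
Qed.


Definition hr (q : {poly R}) : R := if q == 0 then 1 else next_root q 0 1.

Lemma sign_right2 (q : {poly R}) : 0 < hr q /\
  ((forall y, 0 < y < hr q -> 0 < q.[y]) \/ (forall y, 0 < y < hr q -> q.[y] <= 0)).
Proof.
rewrite /hr; case: (eqVneq q 0) => [->|qn0] /=.
  by split => //; right => y _; rewrite horner0.
have hnr : 0 < next_root q 0 1 by apply: next_root_gt.
have hs y : 0 < y < next_root q 0 1 -> Num.sg q.[y] = sgp_right q 0.
  move=> hy; apply: (@sgr_neighpr R 1 q 0 y); by rewrite /neighpr in_itv /=.
split => //.
case: (eqVneq (sgp_right q 0) 1) => hc.
  left => y hy.
  by have := hs y hy; rewrite hc => /eqP; rewrite sgr_cp0.
right => y hy.
rewrite leNgt; apply/negP => hq.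
by move: hc; rewrite -(hs y hy) gtr0_sg // eqxx.
Qed.

End Main.

Unset Implicit Arguments.
Set Strict Implicit.

Theorem corollary1 (R : realType) (n m : nat)
  (B : 'M[int]_(n, m)) (C : 'M[int]_(m, n))
  (dlo dhi : 'rV[R]_m) (alo ahi blo bhi : 'rV[R]_n) :
  (0 < n)%N -> (0 < m)%N ->
  (* the box D *)
  (forall j, 0 <= dlo ord0 j /\ dlo ord0 j <= dhi ord0 j) ->
  (* the box J (finite intervals) *)
  (forall i, alo ord0 i <= ahi ord0 i /\ blo ord0 i <= bhi ord0 i) ->
  (* Assumption (A1) *)
  (forall d : 'rV[R]_m, in_box dlo dhi d ->
     \det (intmx R B *m diag_mx d *m intmx R C) = 0 /\
     count (fun z : R[i] => complex.Re z < 0)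
           (eigs (intmx R B *m diag_mx d *m intmx R C)) = n.-1) ->
  (exists v : 'rV[R]_n, v != 0 /\ (forall i, 0 <= v ord0 i) /\
     v *m intmx R B = 0) ->
  (* Assumption (A2) for every admissible pair (J2, J4) *)
  (forall a b : 'rV[R]_n, in_box alo ahi a -> in_box blo bhi b ->
     A2 (diag_mx a) (diag_mx b)) ->
  let PsiM := Psi_minus B C dlo dhi alo ahi blo bhi in
  let PsiP := Psi_plus B C dlo dhi alo ahi blo bhi in
  let adm d a b := [/\ in_box dlo dhi d, in_box alo ahi a & in_box blo bhi b] in
  (* (i) *)
  [/\ (exists d a b, adm d a b /\ microphase B C d a b) ->
        initially_positive PsiP,
  (* (ii) *)
      (initially_positive PsiM /\ neg_sign_change PsiM) \/
      (initially_positive PsiP /\ neg_sign_change PsiP) ->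
        exists d a b, adm d a b /\ microphase B C d a b,
  (* (iii) *)
      initially_positive PsiM -> neg_sign_change PsiP ->
        forall d a b, adm d a b -> microphase B C d a b
  & (* (iv) *)
      forall k : R, 0 <= k ->
      let f sd sa sb := \det (- sysmx B C (vertex dlo dhi sd)
                                (vertex alo ahi sa) (vertex blo bhi sb) k) in
      ((exists sd sa sb, PsiM k = f sd sa sb) /\
       (forall sd sa sb, PsiM k <= f sd sa sb)) /\
      ((exists sd sa sb, PsiP k = f sd sa sb) /\
       (forall sd sa sb, f sd sa sb <= PsiP k))].
Proof.
move=> n0 m0 hD hJ hA1 _ hA2 PsiM PsiP adm.
have hd j : dlo 0 j <= dhi 0 j by case: (hD j).
have ha j : alo 0 j <= ahi 0 j by case: (hJ j).
have hb j : blo 0 j <= bhi 0 j by case: (hJ j).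
have PP k := psi_props B C hd ha hb k.
have geM k d a b : adm d a b -> PsiM k <= Fd B C k d a b.
  rewrite /PsiM; case=> h1 h2 h3; have [vmin [vmax [-> _ _ hall]]] := PP k.
  by case/andP: (hall d a b h1 h2 h3).
have leP k d a b : adm d a b -> Fd B C k d a b <= PsiP k.
  rewrite /PsiP; case=> h1 h2 h3; have [vmin [vmax [_ -> _ hall]]] := PP k.
  by case/andP: (hall d a b h1 h2 h3).
have vadm (v : {ffun 'I_m -> bool} * {ffun 'I_n -> bool} * {ffun 'I_n -> bool}) :
    adm (vertex dlo dhi v.1.1) (vertex alo ahi v.1.2) (vertex blo bhi v.2).
  by split; apply: vertex_in_box.
have micro d a b : adm d a b ->
    (exists kh, 0 < kh /\ forall k, 0 < k < kh -> 0 < Fd B C k d a b) ->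
    (exists k2, 0 < k2 /\ Fd B C k2 d a b < 0) -> microphase B C d a b.
  case=> h1 h2 h3 [kh [kh0 hpos]] [k2 [k20 hk2]].
  have [hdet hcnt] := hA1 d h1.
  have [del [del0 hdel]] := perturb (diag_mx a) (diag_mx b) n0 hdet hcnt.
  pose kh' := Num.min kh (Num.min del (k2 / 2)).
  have [k3 [k23 hk3]] := large_k (intmx R B *m diag_mx d *m intmx R C) n0 (hA2 a b h2 h3) k2.
  exists kh'; split; first by rewrite /kh' !lt_min kh0 del0 divr_gt0.
  split.
    move=> k /andP[k0]; rewrite /kh' !lt_min => /and3P[k1 k2' k3'].
    apply: hdel; first by rewrite k0.
    by apply: hpos; rewrite k0.
  exists k2, k3; split => //.
  - apply: le_lt_trans (_ : k2 / 2 < k2); first by rewrite /kh' !ge_min lexx !orbT.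
    by rewrite ltr_pdivrMr // ltr_pMr // ltr1n.
  - exact: det_neg_rho.
have Fpoly d a b : exists q : {poly R}, forall k, Fd B C k d a b = q.[k].
  by exists (\det (- MP (intmx R B *m diag_mx d *m intmx R C) (diag_mx a) (diag_mx b))) => k;
    rewrite /Fd -detMk.
split.
- move=> [d [a [b [hadm [kh [kh0 [hneg _]]]]]]].
  exists kh; split => // k hk.
  apply: lt_le_trans (leP k d a b hadm).
  exact: rho_neg_det (hneg k hk).
- case.
  + move=> [[kh [kh0 hpos]] [k1 [k2 [k10 k12 _ hk2]]]].
    have [vmin [vmax [eM _ hv _]]] := PP k2.
    exists (vertex dlo dhi vmin.1.1), (vertex alo ahi vmin.1.2), (vertex blo bhi vmin.2).
    split; first exact: vadm.
    apply: micro; first exact: vadm.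
      exists kh; split => // k hk; apply: lt_le_trans (hpos k hk) _.
      exact: geM (vadm vmin).
    exists k2; split; first exact: le_lt_trans k12.
    by move: hk2; rewrite /PsiM eM.
  + move=> [[kh [kh0 hpos]] [k1 [k2 [k10 k12 _ hk2]]]].
    pose V := ({ffun 'I_m -> bool} * {ffun 'I_n -> bool} * {ffun 'I_n -> bool})%type.
    pose v0 : V := ([ffun=> false], [ffun=> false], [ffun=> false]).
    pose qv (v : V) := \det (- MP (intmx R B *m diag_mx (vertex dlo dhi v.1.1) *m intmx R C)
       (diag_mx (vertex alo ahi v.1.2)) (diag_mx (vertex blo bhi v.2))).
    have hqv v k : fv B C dlo dhi alo ahi blo bhi k v = (qv v).[k] by rewrite /fv /Fd -detMk.
    suff [v hvpos] : exists v : V, forall y, 0 < y < hr (qv v) -> 0 < (qv v).[y].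
      exists (vertex dlo dhi v.1.1), (vertex alo ahi v.1.2), (vertex blo bhi v.2).
      split; first exact: vadm.
      apply: micro; first exact: vadm.
        exists (hr (qv v)); split; first by case: (sign_right2 (qv v)).
        by move=> k hk; have := hvpos k hk; rewrite -hqv.
      exists k2; split; first exact: le_lt_trans k12.
      exact: le_lt_trans (leP k2 _ _ _ (vadm v)) hk2.
    case: (Classical_Prop.classic (exists v : V, forall y, 0 < y < hr (qv v) -> 0 < (qv v).[y])) => // hno.
    exfalso.
    have hall v : forall y, 0 < y < hr (qv v) -> (qv v).[y] <= 0.
      case: (sign_right2 (qv v)) => _ [hl|//]; by case: hno; exists v.
    have [dd [dd0 ddk ddv]] := fin_min_pos (e := fun v => hr (qv v)) v0 kh0 (fun v => proj1 (sign_right2 (qv v))).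
    have y0 : 0 < dd / 2 by rewrite divr_gt0.
    have ydd : dd / 2 < dd by rewrite ltr_pdivrMr // ltr_pMr // ltr1n.
    have := hpos (dd / 2); rewrite y0 (lt_le_trans ydd ddk) => /(_ isT).
    rewrite /PsiP; have [vmin [vmax [_ -> _ _]]] := PP (dd / 2).
    rewrite hqv ltNge hall //.
    by rewrite y0 (lt_le_trans ydd (ddv vmax)).
- move=> [kh [kh0 hpos]] [k1 [k2 [k10 k12 _ hk2]]] d a b hadm.
  apply: micro => //.
    exists kh; split => // k hk; apply: lt_le_trans (hpos k hk) _.
    exact: geM.
  exists k2; split; first exact: le_lt_trans k12.
  exact: le_lt_trans (leP k2 d a b hadm) hk2.
- move=> k _ f; rewrite /PsiM /PsiP.
  have [vmin [vmax [eM eP hv _]]] := PP k.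
  split; split.
  + by exists vmin.1.1, vmin.1.2, vmin.2; rewrite eM.
  + by move=> sd sa sb; rewrite eM; case/andP: (hv (sd, sa, sb)).
  + by exists vmax.1.1, vmax.1.2, vmax.2; rewrite eP.
  + by move=> sd sa sb; rewrite eP; case/andP: (hv (sd, sa, sb)).
Qed.
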